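(* For every formula $A$ of $\mathbf{L_1}$: $\dashv_H A$ if and only if $\dashv_T A$.
   Context: Formulas of $\mathbf{L_1}$: built from atomic formulas $\epsilon ab$ ($a,b$ name variables, possibly equal) with primitive connectives $\vee,\sim$; $\wedge,\supset,\equiv$ defined as usual. Disjunctions may be associated in any way. $\vdash_H A$: $A$ belongs to the smallest set containing all instances of classical propositional tautologies and all formulas $\epsilon ab\supset\epsilon aa$, $(\epsilon ab\wedge\epsilon bc)\supset\epsilon ac$, $(\epsilon ab\wedge\epsilon bb)\supset\epsilon ba$, closed under modus ponens. Positive/negative parts (occurrences): $A$ is a positive part of $A$; if $B\vee C$ is a positive part then $B,C$ are positive parts; if $\sim B$ is a positive part then $B$ is a negative part; if $\sim B$ is a negative part then $B$ is a positive part. $F[B_+]$ ($G[B_-]$) denotes a formula with a specified occurrence of $B$ as positive (negative) part; $F[B_+,C_-]$ etc. denote specified non-overlapping occurrences. Tableaux: reduction rules ($\vee_-$) $G[B\vee C_-]$ $\mapsto$ two branches $G[B\vee C_-]\vee\sim B$, $G[B\vee C_-]\vee\sim C$; ($\epsilon_1$) $G[\epsilon ab_-]\mapsto G[\epsilon ab_-]\vee\sim\epsilon aa$; ($\epsilon_2$) $G[\epsilon ab_-,\epsilon bc_-]\mapsto G[\epsilon ab_-,\epsilon bc_-]\vee\sim\epsilon ac$; ($\epsilon_{3b}$) $G[\epsilon ab_-,\epsilon bb_-]\mapsto G[\epsilon ab_-,\epsilon bb_-]\vee\sim\epsilon ba$. A tableau for $A$ is a finite tree with root $A$ whose non-leaf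 nodes have as children the result of applying one rule. Hintikka formula: a formula $H$ such that (1) $H$ is not of the form $F[B_+,B_-]$; (2) if $B\vee C$ is a negative part of $H$ then $B$ or $C$ is; (3) if $\epsilon ab$ is a negative part then so is $\epsilon aa$; (4) if $\epsilon ab,\epsilon bc$ are negative parts then so is $\epsilon ac$; (5) if $\epsilon ab,\epsilon bb$ are negative parts then so is $\epsilon ba$. $\mathbf{HAR}$: fix a name variable $a_0$; $\dashv_H$ is the smallest set such that $\dashv_H\epsilon a_0a_0$; $\dashv_H\sim\epsilon a_0a_0$; if $\vdash_H A\supset B$ and $\dashv_H B$ then $\dashv_H A$; if $\dashv_H A$ and $A$ is obtained from $B$ by uniform substitution of name variables for name variables then $\dashv_H B$; if $A$ is a Hintikka formula that is a disjunction of atomic or negated atomic formulas, $\dashv_H A$, and $\epsilon ab$ is not a negative part of $A$, then $\dashv_H A\vee\epsilon ab$. Gentzen-type axiomatic rejection $\mathbf{GAR}$: $\dashv_T A$ means that there exists a tableau for $A$ at least one branch of which ends with a Hintikka formula. *)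

(* Defs.v *)
From Stdlib Require Import List Bool.
Import ListNotations.

Definition name := nat.

Inductive form : Type :=
| Eps : name -> name -> form
| Or  : form -> form -> form
| Neg : form -> form.

Definition And (A B : form) : form := Neg (Or (Neg A) (Neg B)).
Definition Imp (A B : form) : form := Or (Neg A) B.
Definition Equiv (A B : form) : form := And (Imp A B) (Imp B A).

Inductive pform : Type :=
| PVar : nat -> pform
| POr  : pform -> pform -> pform
| PNeg : pform -> pform.

Fixpoint peval (v : nat -> bool) (P : pform) : bool :=
  match P with
  | PVar n => v n
  | POr P Q => peval v P || peval v Q
  | PNeg P => negb (peval v P)
  end.

Definition ptautology (P : pform) : Prop := forall v, peval v P = true.

Fixpoint pinst (s : nat -> form) (P : pform) : form :=
  match P with
  | PVar n => s n
  | POr P Q => Or (pinst s P) (pinst s Q)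
  | PNeg P => Neg (pinst s P)
  end.

Definition taut_instance (A : form) : Prop :=
  exists (P : pform) (s : nat -> form), ptautology P /\ pinst s P = A.

Inductive provH : form -> Prop :=
| provH_taut : forall A, taut_instance A -> provH A
| provH_ax1 : forall a b, provH (Imp (Eps a b) (Eps a a))
| provH_ax2 : forall a b c, provH (Imp (And (Eps a b) (Eps b c)) (Eps a c))
| provH_ax3 : forall a b, provH (Imp (And (Eps a b) (Eps b b)) (Eps b a))
| provH_mp : forall A B, provH (Imp A B) -> provH A -> provH B.

(* An occurrence is given by the path from the root. *)
Inductive dir : Type := DL | DR | DN.

(* part A pos p B : the occurrence of B at path p is a positive part of A
   (pos = true) or a negative part of A (pos = false). *)
Inductive part (A : form) : bool -> list dir -> form -> Prop :=
| part_self : part A true [] A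
| part_orL : forall p B C, part A true p (Or B C) -> part A true (p ++ [DL]) B
| part_orR : forall p B C, part A true p (Or B C) -> part A true (p ++ [DR]) C
| part_neg : forall s p B, part A s p (Neg B) -> part A (negb s) (p ++ [DN]) B.

Definition pospart (A B : form) : Prop := exists p, part A true p B.
Definition negpart (A B : form) : Prop := exists p, part A false p B.

Definition hintikka (H : form) : Prop :=
  (~ exists B p q, part H true p B /\ part H false q B) /\
  (forall B C, negpart H (Or B C) -> negpart H B \/ negpart H C) /\
  (forall a b, negpart H (Eps a b) -> negpart H (Eps a a)) /\
  (forall a b c, negpart H (Eps a b) -> negpart H (Eps b c) -> negpart H (Eps a c)) /\
  (forall a b, negpart H (Eps a b) -> negpart H (Eps b b) -> negpart H (Eps b a)).

Definition rule_or (G G1 G2 : form) : Prop :=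
  exists B C p, part G false p (Or B C) /\ G1 = Or G (Neg B) /\ G2 = Or G (Neg C).

(* Non-branching rules (eps_1), (eps_2), (eps_3b); two specified occurrences
   are required to be non-overlapping (distinct paths). *)
Definition rule_eps (G G' : form) : Prop :=
  (exists a b p, part G false p (Eps a b) /\ G' = Or G (Neg (Eps a a))) \/
  (exists a b c p q, p <> q /\ part G false p (Eps a b) /\ part G false q (Eps b c)
                     /\ G' = Or G (Neg (Eps a c))) \/
  (exists a b p q, p <> q /\ part G false p (Eps a b) /\ part G false q (Eps b b)
                   /\ G' = Or G (Neg (Eps b a))).

Inductive tree : Type :=
| Leaf  : form -> tree
| Node1 : form -> tree -> tree
| Node2 : form -> tree -> tree -> tree.

Definition root (t : tree) : form :=
  match t with Leaf F | Node1 F _ | Node2 F _ _ => F end.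

Inductive tableau : tree -> Prop :=
| tab_leaf : forall F, tableau (Leaf F)
| tab_node1 : forall F t, rule_eps F (root t) -> tableau t -> tableau (Node1 F t)
| tab_node2 : forall F t1 t2, rule_or F (root t1) (root t2) ->
    tableau t1 -> tableau t2 -> tableau (Node2 F t1 t2).

Inductive hintikka_branch : tree -> Prop :=
| hb_leaf : forall F, hintikka F -> hintikka_branch (Leaf F)
| hb_node1 : forall F t, hintikka_branch t -> hintikka_branch (Node1 F t)
| hb_node2l : forall F t1 t2, hintikka_branch t1 -> hintikka_branch (Node2 F t1 t2)
| hb_node2r : forall F t1 t2, hintikka_branch t2 -> hintikka_branch (Node2 F t1 t2).

Definition rejT (A : form) : Prop :=
  exists t, tableau t /\ root t = A /\ hintikka_branch t.

(* ---------- HAR: -|_H (relative to the fixed name variable a0) ---------- *)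
Fixpoint subst_names (s : name -> name) (A : form) : form :=
  match A with
  | Eps a b => Eps (s a) (s b)
  | Or B C => Or (subst_names s B) (subst_names s C)
  | Neg B => Neg (subst_names s B)
  end.

Inductive lit_disj : form -> Prop :=
| ld_atom : forall a b, lit_disj (Eps a b)
| ld_neg : forall a b, lit_disj (Neg (Eps a b))
| ld_or : forall A B, lit_disj A -> lit_disj B -> lit_disj (Or A B).

Inductive rejH (a0 : name) : form -> Prop :=
| rejH_ax1 : rejH a0 (Eps a0 a0)
| rejH_ax2 : rejH a0 (Neg (Eps a0 a0))
| rejH_mp : forall A B, provH (Imp A B) -> rejH a0 B -> rejH a0 A
| rejH_subst : forall A B (s : name -> name),
    rejH a0 A -> A = subst_names s B -> rejH a0 B
| rejH_ext : forall A a b, hintikka A -> lit_disj A -> rejH a0 A ->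
    ~ negpart A (Eps a b) -> rejH a0 (Or A (Eps a b)).

(* Main.v *)
Require Import Defs.
From Stdlib Require Import List Bool Arith Lia Classical ClassicalEpsilon Cantor.
Import ListNotations.

Fixpoint eval (V : name -> name -> bool) (F : form) : bool :=
  match F with
  | Eps a b => V a b
  | Or B C => eval V B || eval V C
  | Neg B => negb (eval V B)
  end.

Definition closedV (V : name -> name -> bool) : Prop :=
  (forall a b, V a b = true -> V a a = true) /\
  (forall a b c, V a b = true -> V b c = true -> V a c = true) /\
  (forall a b, V a b = true -> V b b = true -> V b a = true).

Definition invalid (A : form) : Prop := exists V, closedV V /\ eval V A = false.

Lemma part_or_fwd G X s p F : part (Or G X) s p F ->
  (s = true /\ p = [] /\ F = Or G X) \/
  (exists p', p = DL :: p' /\ part G s p' F) \/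
  (exists p', p = DR :: p' /\ part X s p' F).
Proof.
  induction 1.
  - left; auto.
  - destruct IHpart as [[_ [-> E]]|[[p' [-> H']]|[p' [-> H']]]].
    + inversion E; subst. right; left. exists []. split; [reflexivity|constructor].
    + right; left. exists (p' ++ [DL]). split; [reflexivity|]. eapply part_orL; eauto.
    + right; right. exists (p' ++ [DL]). split; [reflexivity|]. eapply part_orL; eauto.
  - destruct IHpart as [[_ [-> E]]|[[p' [-> H']]|[p' [-> H']]]].
    + inversion E; subst. right; right. exists []. split; [reflexivity|constructor].
    + right; left. exists (p' ++ [DR]). split; [reflexivity|]. eapply part_orR; eauto.
    + right; right. exists (p' ++ [DR]). split; [reflexivity|]. eapply part_orR; eauto.
  - destruct IHpart as [[_ [-> E]]|[[p' [-> H']]|[p' [-> H']]]].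
    + discriminate.
    + right; left. exists (p' ++ [DN]). split; [reflexivity|]. eapply part_neg; eauto.
    + right; right. exists (p' ++ [DN]). split; [reflexivity|]. eapply part_neg; eauto.
Qed.

Lemma part_orL_lift G X s p F : part G s p F -> part (Or G X) s (DL :: p) F.
Proof.
  induction 1.
  - apply (part_orL (Or G X) [] G X). constructor.
  - apply (part_orL _ (DL :: p) B C). auto.
  - apply (part_orR _ (DL :: p) B C). auto.
  - apply (part_neg _ s (DL :: p) B). auto.
Qed.

Lemma part_orR_lift G X s p F : part X s p F -> part (Or G X) s (DR :: p) F.
Proof.
  induction 1.
  - apply (part_orR (Or G X) [] G X). constructor.
  - apply (part_orL _ (DR :: p) B C). auto.
  - apply (part_orR _ (DR :: p) B C). auto.
  - apply (part_neg _ s (DR :: p) B). auto.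
Qed.

Lemma part_neg_fwd G s p F : part (Neg G) s p F ->
  (s = true /\ p = [] /\ F = Neg G) \/
  (s = false /\ p = [DN] /\ F = G) \/
  (exists H p', G = Neg H /\ p = DN :: DN :: p' /\ part H s p' F).
Proof.
  induction 1.
  - left; auto.
  - destruct IHpart as [[_ [-> E]]|[[E _]|[K [p' [-> [-> H']]]]]]; try discriminate.
    right; right. exists K, (p' ++ [DL]). split; [reflexivity|]. split; [reflexivity|]. eapply part_orL; eauto.
  - destruct IHpart as [[_ [-> E]]|[[E _]|[K [p' [-> [-> H']]]]]]; try discriminate.
    right; right. exists K, (p' ++ [DR]). split; [reflexivity|]. split; [reflexivity|]. eapply part_orR; eauto.
  - destruct IHpart as [[-> [-> E]]|[[-> [-> E]]|[K [p' [-> [-> H']]]]]].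
    + inversion E; subst. right; left. auto.
    + subst. right; right. exists B, []. simpl. split; [reflexivity|]. split; [reflexivity|]. constructor.
    + right; right. exists K, (p' ++ [DN]). split; [reflexivity|]. split; [reflexivity|]. eapply part_neg; eauto.
Qed.

Lemma part_neg1 G : part (Neg G) false [DN] G.
Proof. apply (part_neg (Neg G) true [] G). constructor. Qed.

Lemma part_negneg_lift H s p F : part H s p F -> part (Neg (Neg H)) s (DN :: DN :: p) F.
Proof.
  induction 1.
  - apply (part_neg _ false [DN] H). apply part_neg1.
  - apply (part_orL _ (DN :: DN :: p) B C). auto.
  - apply (part_orR _ (DN :: DN :: p) B C). auto.
  - apply (part_neg _ s (DN :: DN :: p) B). auto.
Qed.

Lemma part_eps_fwd a b s p F : part (Eps a b) s p F -> s = true /\ p = [] /\ F = Eps a b.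
Proof.
  induction 1; auto.
  - destruct IHpart as [_ [_ E]]; discriminate.
  - destruct IHpart as [_ [_ E]]; discriminate.
  - destruct IHpart as [_ [_ E]]; discriminate.
Qed.

Fixpoint size (F : form) : nat :=
  match F with Eps _ _ => 1 | Or A B => S (size A + size B) | Neg A => S (size A) end.

Lemma part_det_n n : forall G, size G <= n -> forall s s' p F F', part G s p F -> part G s' p F' -> s = s' /\ F = F'.
Proof.
  induction n; intros G Hs; [destruct G; simpl in Hs; lia|].
  intros s s' p F F' H1 H2. destruct G as [a b|B C|B].
  - apply part_eps_fwd in H1; apply part_eps_fwd in H2. intuition congruence.
  - simpl in Hs. apply part_or_fwd in H1; apply part_or_fwd in H2.
    destruct H1 as [[? [? ?]]|[[p1 [? ?]]|[p1 [? ?]]]];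
    destruct H2 as [[? [? ?]]|[[p2 [? ?]]|[p2 [? ?]]]]; subst; try discriminate; try (split; congruence).
    + injection H1; intros; subst. eapply (IHn B); eauto; lia.
    + injection H1; intros; subst. eapply (IHn C); eauto; lia.
  - simpl in Hs. apply part_neg_fwd in H1; apply part_neg_fwd in H2.
    destruct H1 as [[? [? ?]]|[[? [? ?]]|[H [p1 [? [? ?]]]]]];
    destruct H2 as [[? [? ?]]|[[? [? ?]]|[H' [p2 [? [? ?]]]]]]; subst; try discriminate; try (split; congruence).
    match goal with E: DN :: DN :: _ = DN :: DN :: _ |- _ => injection E; intros; subst end. match goal with E: Neg _ = Neg _ |- _ => injection E; intros; subst end.
    eapply (IHn H'); eauto. simpl in Hs; lia.
Qed.

Lemma part_det G s s' p F F' : part G s p F -> part G s' p F' -> s = s' /\ F = F'.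
Proof. apply (part_det_n (size G) G (le_n _)). Qed.


Lemma part_size A s p F : part A s p F -> size F <= size A.
Proof. induction 1; simpl in *; lia. Qed.

Lemma part_eval V G s p F : part G s p F -> eval V G = false -> eval V F = negb s.
Proof.
  induction 1; intro E; simpl in *; auto.
  - specialize (IHpart E). apply orb_false_iff in IHpart. tauto.
  - specialize (IHpart E). apply orb_false_iff in IHpart. tauto.
  - specialize (IHpart E). destruct (eval V B), s; simpl in *; congruence.
Qed.
Lemma eval_pinst V s P : eval V (pinst s P) = peval (fun n => eval V (s n)) P.
Proof. induction P; simpl; congruence. Qed.

Lemma provH_sound F : provH F -> forall V, closedV V -> eval V F = true.
Proof.
  induction 1; intros V [h1 [h2 h3]]; simpl.
  - destruct H as [P [s [HP <-]]]. rewrite eval_pinst. apply HP.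
  - destruct (V a b) eqn:E; simpl; auto; try (rewrite (h1 _ _ E); reflexivity).
  - destruct (V a b) eqn:E1, (V b c) eqn:E2; simpl; auto; try (rewrite (h2 _ _ _ E1 E2); reflexivity).
  - destruct (V a b) eqn:E1, (V b b) eqn:E2; simpl; auto; try (rewrite (h3 _ _ E1 E2); reflexivity).
  - specialize (IHprovH1 V (conj h1 (conj h2 h3))). specialize (IHprovH2 V (conj h1 (conj h2 h3))).
    simpl in IHprovH1. rewrite IHprovH2 in IHprovH1. exact IHprovH1.
Qed.

Definition dec (P : Prop) : bool := if excluded_middle_informative P then true else false.
Lemma dec_true P : dec P = true <-> P.
Proof. unfold dec; destruct (excluded_middle_informative P); split; auto; discriminate. Qed.

Lemma hintikka_invalid H : hintikka H -> invalid H.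
Proof.
  intros [c1 [c2 [c3 [c4 c5]]]].
  set (V := fun x y => dec (negpart H (Eps x y))).
  assert (key : forall F, (forall p, part H true p F -> eval V F = false) /\
                          (forall p, part H false p F -> eval V F = true)).
  { induction F as [x y|B IB C IC|B IB]; split; intros p Hp; simpl.
    - unfold V. destruct (dec (negpart H (Eps x y))) eqn:E; auto.
      apply (proj1 (dec_true _)) in E. destruct E as [q Hq]. exfalso. apply c1. eauto.
    - unfold V. apply dec_true. exists p; auto.
    - apply orb_false_iff. split.
      + eapply (proj1 IB). eapply part_orL; eauto.
      + eapply (proj1 IC). eapply part_orR; eauto.
    - destruct (c2 B C (ex_intro _ p Hp)) as [[q Hq]|[q Hq]].
      + rewrite (proj2 IB q Hq). reflexivity.
      + rewrite (proj2 IC q Hq). apply orb_true_r.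
    - rewrite (proj2 IB (p ++ [DN])). reflexivity. apply (part_neg H true p B Hp).
    - rewrite (proj1 IB (p ++ [DN])). reflexivity. apply (part_neg H false p B Hp). }
  exists V. split.
  - unfold closedV, V. repeat split; intros; rewrite dec_true in *; eauto.
  - apply (proj1 (key H) []). constructor.
Qed.

Lemma eval_subst V s B : eval V (subst_names s B) = eval (fun x y => V (s x) (s y)) B.
Proof. induction B; simpl; congruence. Qed.

Lemma ext_hintikka A a b : hintikka A -> ~ negpart A (Eps a b) -> hintikka (Or A (Eps a b)).
Proof.
  intros [c1 [c2 [c3 [c4 c5]]]] Hn.
  assert (NP : forall F, negpart (Or A (Eps a b)) F <-> negpart A F).
  { intro F; split; intros [p Hp].
    - apply part_or_fwd in Hp.
      destruct Hp as [[E _]|[[p' [_ H']]|[p' [_ H']]]]; [discriminate| exists p'; auto |].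
      apply part_eps_fwd in H'. destruct H'; discriminate.
    - exists (DL :: p). apply part_orL_lift. auto. }
  repeat split.
  - intros [B [p [q [Hp Hq]]]].
    apply part_or_fwd in Hq. destruct Hq as [[E _]|[[q' [_ Hq]]|[q' [_ Hq]]]]; [discriminate| |].
    2:{ apply part_eps_fwd in Hq. destruct Hq; discriminate. }
    apply part_or_fwd in Hp. destruct Hp as [[_ [_ E]]|[[p' [_ Hp]]|[p' [_ Hp]]]].
    + subst. apply part_size in Hq. simpl in Hq. lia.
    + apply c1. eauto.
    + apply part_eps_fwd in Hp. destruct Hp as [_ [_ ->]]. apply Hn. exists q'. auto.
  - intros B C H. rewrite !NP. apply c2. apply NP. auto.
  - intros x y H. rewrite NP in *. eauto.
  - intros x y z H1 H2. rewrite NP in *. eauto.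
  - intros x y H1 H2. rewrite NP in *. eauto.
Qed.

Lemma rejH_invalid a0 A : rejH a0 A -> invalid A.
Proof.
  induction 1.
  - exists (fun _ _ => false). split; [repeat split; discriminate | reflexivity].
  - exists (fun _ _ => true). split; [repeat split; reflexivity | reflexivity].
  - destruct IHrejH as [V [HV E]]. exists V. split; auto.
    pose proof (provH_sound _ H V HV) as S. simpl in S. rewrite E in S.
    destruct (eval V A); auto.
  - destruct IHrejH as [V [[h1 [h2 h3]] E]]. subst. rewrite eval_subst in E.
    exists (fun x y => V (s x) (s y)). split; auto. repeat split; eauto.
  - apply hintikka_invalid. apply ext_hintikka; auto.
Qed.

Lemma branch_invalid t : hintikka_branch t -> tableau t -> invalid (root t).
Proof.
  intros Hb Ht. induction Hb; inversion Ht; subst; simpl.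
  - apply hintikka_invalid; auto.
  - destruct (IHHb H2) as [V [HV E]]. exists V; split; auto.
    destruct H1 as [[a [b [p [_ E1]]]]|[[a [b [c [p [q [_ [_ [_ E1]]]]]]]]|[a [b [p [q [_ [_ [_ E1]]]]]]]]];
    rewrite E1 in E; simpl in E; apply orb_false_iff in E; tauto.
  - destruct (IHHb H3) as [V [HV E]]. exists V; split; auto.
    destruct H2 as [B [C [p [_ [E1 _]]]]]. rewrite E1 in E. simpl in E; apply orb_false_iff in E; tauto.
  - destruct (IHHb H4) as [V [HV E]]. exists V; split; auto.
    destruct H2 as [B [C [p [_ [_ E1]]]]]. rewrite E1 in E. simpl in E; apply orb_false_iff in E; tauto.
Qed.

Lemma rejT_invalid A : rejT A -> invalid A.
Proof. intros [t [Ht [<- Hb]]]. apply branch_invalid; auto. Qed.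
Fixpoint subforms (F : form) : list form :=
  F :: match F with Eps _ _ => [] | Or B C => subforms B ++ subforms C | Neg B => subforms B end.
Fixpoint names (F : form) : list name :=
  match F with Eps a b => [a; b] | Or B C => names B ++ names C | Neg B => names B end.
Definition allatoms (N : list name) : list form := flat_map (fun x => map (Eps x) N) N.

Lemma allatoms_In N F : In F (allatoms N) -> exists x y, F = Eps x y /\ In x N /\ In y N.
Proof.
  unfold allatoms. rewrite in_flat_map. intros [x [Hx HF]]. apply in_map_iff in HF.
  destruct HF as [y [<- Hy]]. eauto.
Qed.
Lemma allatoms_In2 N x y : In x N -> In y N -> In (Eps x y) (allatoms N).
Proof. intros. unfold allatoms. rewrite in_flat_map. exists x. split; auto. apply in_map; auto. Qed.

Lemma sub_refl F : In F (subforms F).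
Proof. destruct F; simpl; auto. Qed.

Lemma sub_trans A : forall X, In X (subforms A) -> incl (subforms X) (subforms A).
Proof.
  induction A; simpl; intros X HX.
  - destruct HX as [<-|[]]. apply incl_refl.
  - destruct HX as [<-|HX]. apply incl_refl.
    apply in_app_or in HX. destruct HX as [HX|HX].
    + intros F HF. right. apply in_or_app. left. eapply IHA1; eauto.
    + intros F HF. right. apply in_or_app. right. eapply IHA2; eauto.
  - destruct HX as [<-|HX]. apply incl_refl.
    intros F HF. right. eapply IHA; eauto.
Qed.

Lemma part_sub G s p F : part G s p F -> In F (subforms G).
Proof.
  induction 1.
  - apply sub_refl.
  - apply (sub_trans _ _ IHpart). simpl. right. apply in_or_app. left. apply sub_refl.
  - apply (sub_trans _ _ IHpart). simpl. right. apply in_or_app. right. apply sub_refl.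
  - apply (sub_trans _ _ IHpart). simpl. right. apply sub_refl.
Qed.

Lemma names_sub A x y : In (Eps x y) (subforms A) -> In x (names A) /\ In y (names A).
Proof.
  induction A; simpl; intro H.
  - destruct H as [E|[]]. inversion E; subst; simpl; auto.
  - destruct H as [E|H]; [discriminate|]. apply in_app_or in H.
    destruct H as [H|H]; [destruct (IHA1 H)|destruct (IHA2 H)]; split; apply in_or_app; auto.
  - destruct H as [E|H]; [discriminate|]. auto.
Qed.

Section Build.
Variable A : form.
Variable V : name -> name -> bool.
Hypothesis HV : closedV V.
Let N := names A.
Let U := subforms A ++ allatoms N.

Lemma U_closed X s p F : In X U -> part X s p F -> In F U.
Proof.
  intros HX Hp. unfold U in *. apply in_app_or in HX. destruct HX as [HX|HX].
  - apply in_or_app. left. eapply sub_trans; eauto. eapply part_sub; eauto.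
  - apply allatoms_In in HX. destruct HX as [x [y [-> [Hx Hy]]]]. apply part_eps_fwd in Hp.
    destruct Hp as [_ [_ ->]]. apply in_or_app; right. apply allatoms_In2; auto.
Qed.

Lemma U_sub X F : In X U -> In F (subforms X) -> In F U.
Proof.
  intros HX Hp. unfold U in *. apply in_app_or in HX. destruct HX as [HX|HX].
  - apply in_or_app. left. eapply sub_trans; eauto.
  - apply allatoms_In in HX. destruct HX as [x [y [-> [Hx Hy]]]].
    destruct Hp as [<-|[]]. apply in_or_app; right. apply allatoms_In2; auto.
Qed.

Lemma U_eps x y : In (Eps x y) U -> In x N /\ In y N.
Proof.
  unfold U. intro H. apply in_app_or in H. destruct H as [H|H].
  - apply names_sub; auto.
  - apply allatoms_In in H. destruct H as [x' [y' [E [? ?]]]]. inversion E; subst; auto.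
Qed.

Lemma U_atom x y : In x N -> In y N -> In (Eps x y) U.
Proof. intros. unfold U. apply in_or_app; right. apply allatoms_In2; auto. Qed.

Definition Inv G := eval V G = false /\ (forall p F, part G false p F -> In F U).
Definition Meas G n := forall L, NoDup L -> (forall u, In u L -> In u U /\ ~ negpart G u) -> length L <= n.

Lemma ext_inv G x : Inv G -> In x U -> eval V x = true -> Inv (Or G (Neg x)).
Proof.
  intros [E HG] Hx Ex. split.
  - simpl. rewrite E, Ex. reflexivity.
  - intros p F Hp. apply part_or_fwd in Hp.
    destruct Hp as [[E1 _]|[[p' [_ Hp]]|[p' [_ Hp]]]]; [discriminate|eauto|].
    apply part_neg_fwd in Hp. destruct Hp as [[E1 _]|[[_ [_ ->]]|[K [q [-> [_ Hq]]]]]]; [discriminate|auto|].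
    eapply U_sub; [exact Hx|]. simpl. right. eapply part_sub; eauto.
Qed.

Lemma negpart_mono G X u : negpart G u -> negpart (Or G X) u.
Proof. intros [p Hp]. exists (DL :: p). apply part_orL_lift; auto. Qed.

Lemma negpart_new G x : negpart (Or G (Neg x)) x.
Proof. exists [DR; DN]. apply part_orR_lift. apply part_neg1. Qed.

Lemma ext_meas G x n : Meas G n -> In x U -> ~ negpart G x ->
  exists m, n = S m /\ Meas (Or G (Neg x)) m.
Proof.
  intros HM Hx Hn.
  assert (K : forall L, NoDup L -> (forall u, In u L -> In u U /\ ~ negpart (Or G (Neg x)) u) -> S (length L) <= n).
  { intros L HL HU. apply (HM (x :: L)).
    - constructor; auto. intro HxL. apply (proj2 (HU x HxL)). apply negpart_new.
    - intros u [<-|Hu]; [auto|]. destruct (HU u Hu) as [H1 H2]. split; auto.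
      intro H3. apply H2. apply negpart_mono; auto. }
  destruct n as [|m].
  - specialize (K [] (NoDup_nil _) ltac:(intros u [])). simpl in K. lia.
  - exists m. split; auto. intros L HL HU. specialize (K L HL HU). lia.
Qed.

Lemma step G : Inv G -> ~ hintikka G ->
  (exists x, In x U /\ ~ negpart G x /\ eval V x = true /\ rule_eps G (Or G (Neg x))) \/
  (exists B C x, rule_or G (Or G (Neg B)) (Or G (Neg C)) /\ (x = B \/ x = C) /\
     In x U /\ ~ negpart G x /\ eval V x = true).
Proof.
  intros [EG HU] NH. destruct HV as [h1 [h2 h3]].
  assert (NT : forall p F, part G false p F -> eval V F = true).
  { intros p F Hp. apply (part_eval V _ _ _ _ Hp EG). }
  destruct (classic (exists B C, negpart G (Or B C) /\ ~ negpart G B /\ ~ negpart G C))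
    as [[B [C [[p Hp] [NB NC]]]]|no2].
  { right. pose proof (NT _ _ Hp) as E. simpl in E.
    pose proof (HU _ _ Hp) as HO.
    assert (HB : In B U) by (eapply U_closed; [exact HO|]; apply (part_orL _ [] B C); constructor).
    assert (HC : In C U) by (eapply U_closed; [exact HO|]; apply (part_orR _ [] B C); constructor).
    assert (R : rule_or G (Or G (Neg B)) (Or G (Neg C))) by (exists B, C, p; auto).
    destruct (eval V B) eqn:EB.
    - exists B, C, B. auto.
    - exists B, C, C. simpl in E. auto. }
  destruct (classic (exists a b, negpart G (Eps a b) /\ ~ negpart G (Eps a a)))
    as [[a [b [[p Hp] Na]]]|no3].
  { left. exists (Eps a a). pose proof (U_eps _ _ (HU _ _ Hp)) as [Ha Hb].
    split; [apply U_atom; auto|]. split; auto. split.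
    - simpl. apply (h1 a b). apply (NT _ _ Hp).
    - left. exists a, b, p. auto. }
  destruct (classic (exists a b c, negpart G (Eps a b) /\ negpart G (Eps b c) /\ ~ negpart G (Eps a c)))
    as [[a [b [c [[p Hp] [[q Hq] Na]]]]]|no4].
  { left. exists (Eps a c). pose proof (U_eps _ _ (HU _ _ Hp)) as [Ha Hb].
    pose proof (U_eps _ _ (HU _ _ Hq)) as [Hb' Hc].
    split; [apply U_atom; auto|]. split; auto. split.
    - simpl. apply (h2 a b c); [exact (NT _ _ Hp)|exact (NT _ _ Hq)].
    - right; left. exists a, b, c, p, q. repeat split; auto.
      intros ->. destruct (part_det _ _ _ _ _ _ Hp Hq) as [_ E]. inversion E; subst.
      apply Na. exists q; auto. }
  destruct (classic (exists a b, negpart G (Eps a b) /\ negpart G (Eps b b) /\ ~ negpart G (Eps b a)))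
    as [[a [b [[p Hp] [[q Hq] Na]]]]|no5].
  { left. exists (Eps b a). pose proof (U_eps _ _ (HU _ _ Hp)) as [Ha Hb].
    split; [apply U_atom; auto|]. split; auto. split.
    - simpl. apply (h3 a b); [exact (NT _ _ Hp)|exact (NT _ _ Hq)].
    - right; right. exists a, b, p, q. repeat split; auto.
      intros ->. destruct (part_det _ _ _ _ _ _ Hp Hq) as [_ E]. inversion E; subst.
      apply Na. exists q; auto. }
  exfalso. apply NH. repeat split.
  - intros [B [p [q [Hp Hq]]]]. pose proof (part_eval V _ _ _ _ Hp EG).
    pose proof (part_eval V _ _ _ _ Hq EG). simpl in *. congruence.
  - intros B C HO. destruct (classic (negpart G B)); auto. destruct (classic (negpart G C)); auto.
    exfalso. apply no2. eauto.
  - intros a b H. apply NNPP. intro. apply no3. eauto.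
  - intros a b c H1 H2. apply NNPP. intro. apply no4. eauto 6.
  - intros a b H1 H2. apply NNPP. intro. apply no5. eauto.
Qed.

Lemma build n : forall G, Inv G -> Meas G n -> exists t, tableau t /\ root t = G /\ hintikka_branch t.
Proof.
  induction n as [|n IH]; intros G HI HM;
  (destruct (classic (hintikka G)) as [Hh|NH];
   [exists (Leaf G); split; [constructor|split; [reflexivity|constructor; auto]]|]);
  destruct (step G HI NH) as [[x [Hx [Nx [Ex R]]]]|[B [C [x [R [Ex [Hx [Nx Evx]]]]]]]];
  (destruct (ext_meas G x _ HM Hx Nx) as [m [Em HM']]; [try discriminate]);
  try discriminate.
  - injection Em; intros ->. pose proof (ext_inv G x HI Hx Ex) as HI'.
    destruct (IH _ HI' HM') as [t [Ht [Rt Hb]]].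
    exists (Node1 G t). split; [constructor; [rewrite Rt; auto|auto]|]. split; [reflexivity|].
    constructor; auto.
  - injection Em; intros ->. pose proof (ext_inv G x HI Hx Evx) as HI'.
    destruct (IH _ HI' HM') as [t [Ht [Rt Hb]]].
    destruct Ex as [->| ->].
    + exists (Node2 G t (Leaf (Or G (Neg C)))). split; [constructor; [rewrite Rt; auto|auto|constructor]|].
      split; [reflexivity|]. apply hb_node2l; auto.
    + exists (Node2 G (Leaf (Or G (Neg B))) t). split; [constructor; [rewrite Rt; auto|constructor|auto]|].
      split; [reflexivity|]. apply hb_node2r; auto.
Qed.

Lemma invalid_rejT_aux : eval V A = false -> rejT A.
Proof.
  intro E. destruct (build (length U) A) as [t [? [? ?]]].
  - split; auto. intros p F Hp. unfold U. apply in_or_app. left. eapply part_sub; eauto.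
  - intros L HL HU. apply NoDup_incl_length; auto. intros u Hu. apply (HU u Hu).
  - exists t. auto.
Qed.
End Build.

Lemma invalid_rejT A : invalid A -> rejT A.
Proof. intros [V [HV E]]. eapply invalid_rejT_aux; eauto. Qed.
Fixpoint enc (F : form) : pform :=
  match F with
  | Eps x y => PVar (to_nat (x, y))
  | Or B C => POr (enc B) (enc C)
  | Neg B => PNeg (enc B)
  end.
Definition dsub (n : nat) : form := let (x, y) := of_nat n in Eps x y.

Lemma peval_enc v F : peval v (enc F) = eval (fun x y => v (to_nat (x, y))) F.
Proof. induction F; cbn [peval enc eval]; [reflexivity|rewrite IHF1, IHF2; reflexivity|rewrite IHF; reflexivity]. Qed.
Lemma pinst_enc F : pinst dsub (enc F) = F.
Proof.
  induction F; cbn [pinst enc]; [|rewrite IHF1, IHF2; reflexivity|rewrite IHF; reflexivity].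
  unfold dsub. rewrite (cancel_of_to (n, n0)). reflexivity.
Qed.

Lemma taut_provH F : (forall W, eval W F = true) -> provH F.
Proof.
  intro HW. apply provH_taut. exists (enc F), dsub. split.
  - intro v. rewrite peval_enc. apply HW.
  - apply pinst_enc.
Qed.

Fixpoint lits (F : form) : list form :=
  match F with Or B C => lits B ++ lits C | _ => [F] end.

Lemma eval_lits W F : eval W F = existsb (eval W) (lits F).
Proof. induction F; simpl; try rewrite existsb_app; try congruence; rewrite orb_false_r; auto. Qed.

Lemma lits_fold ls : forall K, (forall l, In l ls -> lits l = [l]) -> lits (fold_left Or ls K) = lits K ++ ls.
Proof.
  induction ls as [|l ls IH]; intros K H; simpl. { rewrite app_nil_r; auto. }
  rewrite IH; [|intros; apply H; simpl; auto]. simpl. rewrite (H l (or_introl eq_refl)).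
  rewrite <- app_assoc. reflexivity.
Qed.

Lemma lits_subst s F : lits (subst_names s F) = map (subst_names s) (lits F).
Proof. induction F; simpl; auto. rewrite map_app; congruence. Qed.

Lemma ld_fold ls : forall K, lit_disj K -> (forall l, In l ls -> lit_disj l) -> lit_disj (fold_left Or ls K).
Proof.
  induction ls as [|l ls IH]; intros K HK H; simpl; auto.
  apply IH; [constructor; auto; apply H; simpl; auto|intros; apply H; simpl; auto].
Qed.

Lemma ld_parts K : lit_disj K -> forall s p F, part K s p F ->
  (s = true /\ ((exists B C, F = Or B C) \/ In F (lits K))) \/
  (s = false /\ exists x y, F = Eps x y /\ In (Neg (Eps x y)) (lits K)).
Proof.
  induction 1; intros s p F Hp.
  - apply part_eps_fwd in Hp. destruct Hp as [-> [_ ->]]. left. simpl; auto.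
  - apply part_neg_fwd in Hp.
    destruct Hp as [[-> [_ ->]]|[[-> [_ ->]]|[K [q [E _]]]]]; [left; simpl; auto| |discriminate].
    right. split; auto. exists a, b. simpl; auto.
  - apply part_or_fwd in Hp.
    destruct Hp as [[-> [_ ->]]|[[q [_ Hq]]|[q [_ Hq]]]]; [left; split; eauto| |].
    + destruct (IHlit_disj1 _ _ _ Hq) as [[? [?|?]]|[? [x [y [? ?]]]]]; simpl;
      [left; split; eauto|left; split; auto; right; apply in_or_app; auto|right; split; auto; exists x, y; split; auto; apply in_or_app; auto].
    + destruct (IHlit_disj2 _ _ _ Hq) as [[? [?|?]]|[? [x [y [? ?]]]]]; simpl;
      [left; split; eauto|left; split; auto; right; apply in_or_app; auto|right; split; auto; exists x, y; split; auto; apply in_or_app; auto].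
Qed.

Lemma ld_negpart_in K x y : lit_disj K -> In (Neg (Eps x y)) (lits K) -> negpart K (Eps x y).
Proof.
  induction 1; simpl; intro Hi.
  - destruct Hi as [E|[]]; discriminate.
  - destruct Hi as [E|[]]. inversion E; subst. exists [DN]. apply part_neg1.
  - apply in_app_or in Hi. destruct Hi as [Hi|Hi].
    + destruct (IHlit_disj1 Hi) as [p Hp]. exists (DL :: p). apply part_orL_lift; auto.
    + destruct (IHlit_disj2 Hi) as [p Hp]. exists (DR :: p). apply part_orR_lift; auto.
Qed.

Lemma ld_negpart K F : lit_disj K -> negpart K F -> exists x y, F = Eps x y /\ In (Neg (Eps x y)) (lits K).
Proof.
  intros HK [p Hp]. destruct (ld_parts K HK _ _ _ Hp) as [[E _]|[_ H]]; [discriminate|auto].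
Qed.

Lemma eval_agree W V F : (forall x y, In x (names F) -> In y (names F) -> W x y = V x y) -> eval W F = eval V F.
Proof.
  induction F; simpl; intro H.
  - apply H; simpl; auto.
  - rewrite IHF1, IHF2; auto; intros; apply H; apply in_or_app; auto.
  - rewrite IHF; auto.
Qed.

Lemma names_nonempty F : exists x, In x (names F).
Proof. induction F; simpl; [exists n; auto| destruct IHF1 as [x ?]; exists x; apply in_or_app; auto| auto]. Qed.

Section RejH.
Variable a0 : name.
Variable A : form.
Variable V : name -> name -> bool.
Hypothesis HV : closedV V.
Hypothesis HA : eval V A = false.
Let N := names A.

Definition InvK K := lit_disj K /\
  (forall x y, In (Neg (Eps x y)) (lits K) <-> In x N /\ In y N /\ V x y = true) /\
  (forall x y, In (Eps x y) (lits K) -> V x y = false).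

Lemma InvK_hintikka K : InvK K -> hintikka K.
Proof.
  intros [HK [Hn Hp]]. destruct HV as [h1 [h2 h3]].
  assert (NP : forall x y, negpart K (Eps x y) <-> In x N /\ In y N /\ V x y = true).
  { intros x y; split; intro H.
    - destruct (ld_negpart K _ HK H) as [x' [y' [E H']]]. inversion E; subst. apply Hn; auto.
    - apply ld_negpart_in; auto. apply Hn; auto. }
  repeat split.
  - intros [B [p [q [H1 H2]]]].
    destruct (ld_negpart K B HK (ex_intro _ q H2)) as [x [y [-> Hin]]].
    destruct (ld_parts K HK _ _ _ H1) as [[_ [[B' [C' E]]|Hl]]|[E _]]; [discriminate| |discriminate].
    apply Hp in Hl. apply Hn in Hin. destruct Hin as [_ [_ E]]. congruence.
  - intros B C H. destruct (ld_negpart K _ HK H) as [x [y [E _]]]. discriminate.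
  - intros a b H. apply NP in H. apply NP. destruct H as [? [? ?]]. eauto.
  - intros a b c H1 H2. apply NP in H1. apply NP in H2. apply NP. intuition eauto.
  - intros a b H1 H2. apply NP in H1. apply NP in H2. apply NP. intuition eauto.
Qed.

Lemma ext_many ls : forall K, InvK K -> rejH a0 K ->
  (forall l, In l ls -> exists x y, l = Eps x y /\ V x y = false) -> rejH a0 (fold_left Or ls K).
Proof.
  induction ls as [|l ls IH]; intros K HI HR Hl; simpl; auto.
  destruct (Hl l (or_introl eq_refl)) as [x [y [-> Ex]]].
  apply IH; [| |intros; apply Hl; simpl; auto].
  - destruct HI as [HK [Hn Hp]]. split; [constructor; auto; constructor|]. split.
    + intros a b. simpl. rewrite <- Hn. split; intro H; [|apply in_or_app; auto].
      apply in_app_or in H. destruct H as [H|[E|[]]]; [auto|discriminate].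
    + intros a b H. simpl in H. apply in_app_or in H. destruct H as [H|[E|[]]]; [auto|].
      inversion E; subst; auto.
  - apply rejH_ext; auto.
    + apply InvK_hintikka; auto.
    + apply HI.
    + intro H. destruct HI as [HK [Hn _]]. destruct (ld_negpart K _ HK H) as [x' [y' [E Hin]]].
      inversion E; subst. apply Hn in Hin. destruct Hin as [_ [_ E']]. congruence.
Qed.

Lemma final_D D : (forall x y, In x N -> In y N ->
    In (if V x y then Neg (Eps x y) else Eps x y) (lits D)) -> provH (Imp A D).
Proof.
  intro HD. apply taut_provH. intro W. simpl.
  destruct (eval W D) eqn:ED; [apply orb_true_r|]. rewrite orb_false_r.
  rewrite (eval_agree W V A); [rewrite HA; reflexivity|].
  intros x y Hx Hy. specialize (HD x y Hx Hy). rewrite eval_lits in ED.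
  assert (Hf : eval W (if V x y then Neg (Eps x y) else Eps x y) = false).
  { destruct (eval W _) eqn:E; auto. rewrite <- ED. symmetry. apply existsb_exists. eauto. }
  destruct (V x y); simpl in Hf; auto. destruct (W x y); simpl in *; congruence.
Qed.

Definition P := list_prod N N.
Definition NPl := filter (fun xy => V (fst xy) (snd xy)) P.
Definition PPl := filter (fun xy => negb (V (fst xy) (snd xy))) P.
Definition negs := map (fun xy => Neg (Eps (fst xy) (snd xy))) NPl.
Definition poss := map (fun xy => Eps (fst xy) (snd xy)) PPl.

Lemma negs_In x y : In (Neg (Eps x y)) negs <-> In x N /\ In y N /\ V x y = true.
Proof.
  unfold negs, NPl, P. rewrite in_map_iff. split.
  - intros [[x' y'] [E H]]. inversion E; subst. apply filter_In in H. destruct H as [H E'].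
    apply in_prod_iff in H. simpl in *. tauto.
  - intros [Hx [Hy E]]. exists (x, y). split; auto. apply filter_In. split; auto. apply in_prod; auto.
Qed.

Lemma poss_In x y : In (Eps x y) poss <-> In x N /\ In y N /\ V x y = false.
Proof.
  unfold poss, PPl, P. rewrite in_map_iff. split.
  - intros [[x' y'] [E H]]. inversion E; subst. apply filter_In in H. destruct H as [H E'].
    apply in_prod_iff in H. simpl in *. destruct (V x y); simpl in *; [discriminate|tauto].
  - intros [Hx [Hy E]]. exists (x, y). split; auto. apply filter_In. split; [apply in_prod; auto|].
    simpl. rewrite E. reflexivity.
Qed.

Lemma negs_shape l : In l negs -> exists x y, l = Neg (Eps x y).
Proof. unfold negs. rewrite in_map_iff. intros [[x y] [<- _]]. eauto. Qed.
Lemma poss_shape l : In l poss -> exists x y, l = Eps x y /\ V x y = false.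
Proof.
  intro H. pose proof H as H'. unfold poss in H. rewrite in_map_iff in H.
  destruct H as [[x y] [<- _]]. exists x, y. split; auto. apply poss_In in H'. tauto.
Qed.

Lemma rejH_from K0 rest : InvK K0 -> rejH a0 K0 -> (forall l, In l rest -> In l poss) ->
  (forall l, In l rest -> lits l = [l]) ->
  (forall l, In l (negs ++ poss) -> In l (lits K0 ++ rest)) -> rejH a0 A.
Proof.
  intros HI HR Hr Hrl Hall.
  apply (rejH_mp a0 A (fold_left Or rest K0)).
  - apply final_D. rewrite lits_fold; auto. intros x y Hx Hy. apply Hall. apply in_or_app.
    destruct (V x y) eqn:E; [left; apply negs_In|right; apply poss_In]; auto.
  - apply ext_many; auto. intros l Hl. apply poss_shape; auto.
Qed.

Lemma invalid_rejH_aux : rejH a0 A.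
Proof.
  destruct negs as [|n ns] eqn:En.
  - destruct (names_nonempty A) as [x0 Hx0].
    assert (Vx : V x0 x0 = false).
    { destruct (V x0 x0) eqn:E; auto. exfalso. assert (H : In (Neg (Eps x0 x0)) negs) by (apply negs_In; auto).
      rewrite En in H; destruct H. }
    destruct poss as [|l ls] eqn:Ep.
    { exfalso. assert (H : In (Eps x0 x0) poss) by (apply poss_In; auto). rewrite Ep in H; destruct H. }
    assert (Hl : In l poss) by (rewrite Ep; simpl; auto).
    destruct (poss_shape l Hl) as [x [y [-> Exy]]].
    apply (rejH_from (Eps x y) ls).
    + split; [constructor|]. split.
      * intros a b. split; [simpl; intros [E|[]]; discriminate|]. intro H. apply negs_In in H.
        rewrite En in H; destruct H.
      * simpl. intros a b [E|[]]. inversion E; subst; auto.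
    + apply (rejH_subst a0 (Eps a0 a0) _ (fun _ => a0)); [constructor|reflexivity].
    + intros; rewrite Ep; simpl; auto.
    + intros l Hl'. assert (In l poss) by (rewrite Ep; simpl; auto).
      destruct (poss_shape l H) as [? [? [-> _]]]. reflexivity.
    + intros l' H. rewrite En, Ep in H. simpl in *. auto.
  - assert (Hnl : forall l, In l ns -> lits l = [l]).
    { intros l H. assert (In l negs) by (rewrite En; simpl; auto). destruct (negs_shape l H0) as [? [? ->]]; auto. }
    assert (Hn : lits n = [n]).
    { assert (In n negs) by (rewrite En; simpl; auto). destruct (negs_shape n H) as [? [? ->]]; auto. }
    assert (LK : lits (fold_left Or ns n) = negs) by (rewrite lits_fold, Hn, En; auto).
    apply (rejH_from (fold_left Or ns n) poss).
    + split; [|split].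
      * apply ld_fold; intros; [|]. 
        -- assert (In n negs) by (rewrite En; simpl; auto). destruct (negs_shape n H) as [? [? ->]]; constructor.
        -- assert (In l negs) by (rewrite En; simpl; auto). destruct (negs_shape l H0) as [? [? ->]]; constructor.
      * intros x y. rewrite LK. apply negs_In.
      * intros x y H. rewrite LK in H. destruct (negs_shape _ H) as [? [? E]]. discriminate.
    + set (K := fold_left Or ns n).
      apply (rejH_subst a0 (subst_names (fun _ => a0) K) _ (fun _ => a0)); [|reflexivity].
      apply (rejH_mp a0 _ (Neg (Eps a0 a0))); [|constructor].
      apply taut_provH. intro W. simpl. destruct (W a0 a0) eqn:EW; simpl; [|apply orb_true_r].
      rewrite eval_lits, lits_subst. unfold K. rewrite LK, orb_false_r.
      apply negb_true_iff. apply not_true_iff_false. intro H. apply existsb_exists in H.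
      destruct H as [l [Hl El]]. apply in_map_iff in Hl. destruct Hl as [l0 [<- Hl0]].
      destruct (negs_shape _ Hl0) as [? [? ->]]. simpl in El. rewrite EW in El. discriminate.
    + auto.
    + intros l H. destruct (poss_shape l H) as [? [? [-> _]]]. reflexivity.
    + rewrite LK. auto.
Qed.
End RejH.

Lemma invalid_rejH a0 A : invalid A -> rejH a0 A.
Proof. intros [V [HV E]]. eapply invalid_rejH_aux; eauto. Qed.

Theorem theorem8p2 : forall (a0 : name) (A : form), rejH a0 A <-> rejT A.
Proof.
  intros a0 A. split; intro H.
  - apply invalid_rejT. eapply rejH_invalid; eauto.
  - apply invalid_rejH. apply rejT_invalid; auto.
Qed.
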